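(* Let $G$ be a graph all of whose internal vertices are of type $0$ or $1$, and let $n_0$ denote the maximum number of vertices of a connected component of $G_0$ (with $n_0=0$ if $G_0$ is the null graph). Then: (1) $G$ is well-covered if and only if $G_0$ is well-covered and for every independent set $I$ in $G_1$ of size at most $n_0$ we have $i(G_0-N(I))=\alpha(G_0)$; (2) $\mu_\alpha(G)\leq 1$ if and only if $\mu_\alpha(G_0)\leq 1$ and for every independent set $I$ in $G_1$ of size at most $2n_0$ we have $\alpha(G_0)-i(G_0-N(I))\leq 1$.
   Context: All graphs are finite and simple; the null graph is allowed. For a graph $F$, $\alpha(F)$ is the maximum size of an independent set, $i(F)$ the minimum size of an inclusion-maximal independent set (both $0$ for the null graph), $\mu_\alpha(F)=\alpha(F)-i(F)$, and $F$ is well-covered if $\mu_\alpha(F)=0$. $N(I)=\bigcup_{v\in I}N(v)$ and $G_0-N(I)$ is obtained from $G_0$ by deleting the vertices of $N(I)$. Types of vertices: let $U$ be the set of vertices of $G$ whose connected component is a complete graph. In $G-U$, vertices of degree $1$ are leaves and the others are internal vertices. An internal vertex adjacent to exactly $k$ leaves is of type $k$; every vertex of $U$ is of type $0$. $G_i$ denotes the subgraph of $G$ induced by all vertices of type $i$. *)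

(* Defs.v *)
(* A simple graph G is a symmetric irreflexive relation e on a finType T.
   Induced subgraphs are represented by their vertex sets V : {set T}. *)
From mathcomp Require Import all_boot.
Set Implicit Arguments. Unset Strict Implicit. Unset Printing Implicit Defensive.

Section Graph.
Variables (T : finType) (e : rel T).

Definition indep (S : {set T}) : bool :=
  [forall x in S, forall y in S, ~~ e x y].

Definition alpha (V : {set T}) : nat :=
  \max_(S : {set T} | (S \subset V) && indep S) #|S|.

Definition maxindep (V S : {set T}) : bool :=
  [&& S \subset V, indep S & [forall x in V :\: S, ~~ indep (x |: S)]].

(* i of the subgraph induced by V (minimum size of a maximal independent set;
   #|V| is only a neutral upper bound, a maximal independent set always exists) *)
Definition imin (V : {set T}) : nat :=
  \big[minn/#|V|]_(S : {set T} | maxindep V S) #|S|.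

Definition mu_alpha (V : {set T}) : nat := alpha V - imin V.

Definition well_covered (V : {set T}) : Prop := mu_alpha V = 0.

Definition nbhd (I : {set T}) : {set T} := [set y | [exists x in I, e x y]].

(* U : vertices whose connected component (in G) is a complete graph *)
Definition Uset : {set T} :=
  [set v | [forall x, forall y,
     (connect e v x && connect e v y && (x != y)) ==> e x y]].

Definition degGU (v : T) : nat := #|[set u | e v u & u \notin Uset]|.

Definition leaf (v : T) : bool := (v \notin Uset) && (degGU v == 1).
Definition internal (v : T) : bool := (v \notin Uset) && (degGU v != 1).

Definition nleaves (v : T) : nat := #|[set u | e v u & leaf u]|.

Definition type_set (k : nat) : {set T} :=
  [set v | (internal v && (nleaves v == k)) || ((k == 0) && (v \in Uset))].

Definition induced (V : {set T}) : rel T :=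
  fun x y => [&& e x y, x \in V & y \in V].

Definition max_comp (V : {set T}) : nat :=
  \max_(x in V) #|[set y in V | connect (induced V) x y]|.

End Graph.

(* Main.v *)
Require Import Defs.
From mathcomp Require Import all_boot zify.
Set Implicit Arguments. Unset Strict Implicit. Unset Printing Implicit Defensive.

Section Gen.
Variables (T : finType) (e : rel T).
Hypotheses (esym : symmetric e) (eirr : irreflexive e).

Lemma indepP (S : {set T}) : reflect (forall x y, x \in S -> y \in S -> ~~ e x y) (indep e S).
Proof.
apply: (iffP forallP) => [h x y xS yS | h x].
  by have /implyP/(_ xS)/forallP/(_ y)/implyP/(_ yS) := h x.
by apply/implyP => xS; apply/forallP => y; apply/implyP => yS; apply: h.
Qed.

Lemma indep_sub (S S' : {set T}) : S' \subset S -> indep e S -> indep e S'.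
Proof.
move=> /subsetP sub /indepP h; apply/indepP => x y xS yS; apply: h; exact: sub.
Qed.

Lemma indep0 : indep e set0.
Proof. by apply/indepP => x y; rewrite in_set0. Qed.

Lemma not_indepU1 (S : {set T}) x : indep e S -> ~~ indep e (x |: S) -> exists2 y, y \in S & e x y.
Proof.
move=> /indepP iS nI.
case: (boolP [exists y in S, e x y]) => [/existsP[y /andP[yS exy]]|nex].
  by exists y.
case/negP: nI; apply/indepP => a b /setU1P[->|aS] /setU1P[->|bS].
- by rewrite eirr.
- by apply/negP => exb; case/negP: nex; apply/existsP; exists b; rewrite bS.
- by apply/negP => eax; case/negP: nex; apply/existsP; exists a; rewrite aS esym.
- exact: iS.
Qed.

Lemma alpha_ge (V S : {set T}) : S \subset V -> indep e S -> #|S| <= alpha e V.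
Proof. by move=> h1 h2; apply: (leq_bigmax_cond S); rewrite h1 h2. Qed.

Lemma alpha_att (V : {set T}) : exists S : {set T}, [/\ S \subset V, indep e S & #|S| = alpha e V].
Proof.
have : 0 < #|[pred S : {set T} | (S \subset V) && indep e S]|.
  by apply/card_gt0P; exists set0; rewrite inE sub0set indep0.
case/(eq_bigmax_cond (fun S : {set T} => #|S|)) => S.
rewrite inE => /andP[h1 h2] h3; exists S; split => //.
Qed.

Lemma alpha_mono (V W : {set T}) : V \subset W -> alpha e V <= alpha e W.
Proof.
move=> VW; have [S [h1 h2 <-]] := alpha_att V.
apply: alpha_ge => //; exact: subset_trans VW.
Qed.

Lemma bigmin_le (I : eqType) (r : seq I) (P : pred I) (F : I -> nat) m x :
  x \in r -> P x -> \big[minn/m]_(i <- r | P i) F i <= F x.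
Proof.
elim: r => //= a r IH; rewrite inE big_cons => /orP[/eqP<- ->| xr Px].
  exact: geq_minl.
case: ifP => _; last exact: IH.
exact: leq_trans (geq_minr _ _) (IH xr Px).
Qed.

Lemma bigmin_att (I : eqType) (r : seq I) (P : pred I) (F : I -> nat) m :
  \big[minn/m]_(i <- r | P i) F i = m \/
  exists2 i, P i & \big[minn/m]_(i <- r | P i) F i = F i.
Proof.
elim: r => [|a r IH]; first by left; rewrite big_nil.
rewrite big_cons; case: ifP => Pa; last exact: IH.
rewrite /minn; case: ifP => _; first by right; exists a.
case: IH => [->|[i Pi ->]]; [left|right; exists i] => //.
Qed.

Lemma maxindep_exists (V : {set T}) : exists S : {set T}, maxindep e V S.
Proof.
have [S [h1 h2 h3]] := alpha_att V; exists S.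
rewrite /maxindep h1 h2 /=; apply/forallP => x; apply/implyP.
rewrite inE => /andP[xS xV]; apply/negP => iU.
have : #|x |: S| <= alpha e V.
  by apply: alpha_ge => //; rewrite subUset sub1set xV.
by rewrite cardsU1 xS h3 add1n ltnn.
Qed.

Lemma imin_le (V S : {set T}) : maxindep e V S -> imin e V <= #|S|.
Proof. move=> h; apply: bigmin_le => //; exact: mem_index_enum. Qed.

Lemma maxindep_sub (V S : {set T}) : maxindep e V S -> S \subset V.
Proof. by case/and3P. Qed.
Lemma maxindep_indep (V S : {set T}) : maxindep e V S -> indep e S.
Proof. by case/and3P. Qed.

Lemma imin_att (V : {set T}) : exists S : {set T}, maxindep e V S /\ #|S| = imin e V.
Proof.
case: (bigmin_att (index_enum {set T}) (maxindep e V) (fun S => #|S|) #|V|).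
  move=> h; have [S hS] := maxindep_exists V; exists S; split => //.
  apply/eqP; rewrite eqn_leq imin_le // andbT /imin h.
  by apply: subset_leq_card; apply: maxindep_sub hS.
by case=> S h1 h2; exists S.
Qed.

Lemma imin_le_alpha (V : {set T}) : imin e V <= alpha e V.
Proof.
have [S [h1 <-]] := imin_att V.
by apply: alpha_ge; [apply: maxindep_sub h1 | apply: maxindep_indep h1].
Qed.


Lemma maxindep_intro (V S : {set T}) : S \subset V -> indep e S ->
  (forall x, x \in V -> x \notin S -> exists2 y, y \in S & e x y) -> maxindep e V S.
Proof.
move=> h1 h2 h3; rewrite /maxindep h1 h2 /=; apply/forallP => x; apply/implyP.
rewrite inE => /andP[xS xV]; apply/negP => /indepP iU.
have [y yS exy] := h3 x xV xS.
by have := iU x y (setU11 _ _) (setU1r _ yS); rewrite exy.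
Qed.

Lemma maxindep_elim (V S : {set T}) : maxindep e V S ->
  forall x, x \in V -> x \notin S -> exists2 y, y \in S & e x y.
Proof.
case/and3P => _ iS /forallP h x xV xS; apply: not_indepU1 => //.
by have /implyP := h x; apply; rewrite inE xS xV.
Qed.


Lemma max_maxindep (V S : {set T}) : S \subset V -> indep e S -> #|S| = alpha e V ->
  maxindep e V S.
Proof.
move=> h1 h2 h3; rewrite /maxindep h1 h2 /=; apply/forallP => x; apply/implyP.
rewrite inE => /andP[xS xV]; apply/negP => iU.
have : #|x |: S| <= alpha e V.
  by apply: alpha_ge => //; rewrite subUset sub1set xV.
by rewrite cardsU1 xS h3 add1n ltnn.
Qed.

Lemma nbhd0 : nbhd e set0 = set0.
Proof.
by apply/setP => x; rewrite !inE; apply/existsP => -[y]; rewrite in_set0.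
Qed.

End Gen.

Section Str.
Variables (T : finType) (e : rel T).
Hypotheses (esym : symmetric e) (eirr : irreflexive e).
Hypothesis Htypes : forall v : T, internal e v ->
              v \in type_set e 0 \/ v \in type_set e 1.

Local Notation U := (Uset e).
Local Notation G0 := (type_set e 0).
Local Notation G1 := (type_set e 1).

Lemma inG0 v : (v \in G0) = (internal e v && (nleaves e v == 0)) || (v \in U).
Proof. by rewrite inE. Qed.
Lemma inG1 v : (v \in G1) = internal e v && (nleaves e v == 1).
Proof. by rewrite inE orbF. Qed.

Lemma connect_fw (r : rel T) (W : {set T}) x y :
  (forall a b, a \in W -> r a b -> b \in W) -> x \in W -> connect r x y -> y \in W.
Proof.
move=> h xW /connectP[p pp ->]; elim: p x xW pp => //= a p IH x xW /andP[rxa pp].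
exact: IH (h _ _ xW rxa) pp.
Qed.

Lemma U_edge x y : e x y -> x \in U -> y \in U.
Proof.
rewrite !inE => exy /forallP hx; apply/forallP => a; apply/forallP => b.
apply/implyP => /andP[/andP[ya yb] ab].
have cxy : connect e x y := connect1 exy.
have /forallP/(_ b)/implyP := hx a; apply.
by rewrite ab (connect_trans cxy ya) (connect_trans cxy yb).
Qed.

Lemma U_edgeN x y : e x y -> x \notin U -> y \notin U.
Proof. by move=> exy; apply: contra; apply: U_edge; rewrite esym. Qed.

Lemma leaf_nbr l : leaf e l -> exists p, [/\ e l p, p \notin U & forall u, e l u -> u = p].
Proof.
case/andP => lU /cards1P[p hp]; exists p.
have : p \in [set u | e l u & u \notin U] by rewrite hp set11.
rewrite inE => /andP[elp pU]; split => // u elu.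
have : u \in [set u | e l u & u \notin U] by rewrite inE elu (U_edgeN elu lU).
by rewrite hp inE => /eqP.
Qed.

Definition par l := odflt l [pick u | e l u].

Lemma par_spec l : leaf e l -> e l (par l) /\ forall u, e l u -> u = par l.
Proof.
move=> /leaf_nbr [p [elp pU hp]]; rewrite /par; case: pickP => [u elu | none] /=.
  by rewrite (hp _ elu); split.
by have := none p; rewrite elp.
Qed.

Lemma leaf_notU l : leaf e l -> l \notin U.
Proof. by case/andP. Qed.

Lemma par_not_leaf l : leaf e l -> ~~ leaf e (par l).
Proof.
move=> ll; apply/negP => lp.
have [elp hl] := par_spec ll; have [epl hp] := par_spec lp.
have epl' : e (par l) l by rewrite esym.
have ql : l = par (par l) := hp _ epl'.
case/negP: (leaf_notU ll); rewrite inE; apply/forallP => a; apply/forallP => b.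
apply/implyP => /andP[/andP[ca cb] ab].
have fw : forall x y, x \in [set l; par l] -> e x y -> y \in [set l; par l].
  move=> x y /set2P[->|->] exy; first by rewrite (hl _ exy) set22.
  by rewrite (hp _ exy) -ql set21.
have := connect_fw fw (set21 _ _) ca; have := connect_fw fw (set21 _ _) cb.
move: ab => ab /set2P[bb|bb] /set2P[aa|aa]; move: ab; rewrite aa bb ?eqxx //= => _.
Qed.

Lemma par_G1 l : leaf e l -> par l \in G1.
Proof.
move=> ll; have [elp hl] := par_spec ll.
have pU : par l \notin U := U_edgeN elp (leaf_notU ll).
have pint : internal e (par l).
  by have := par_not_leaf ll; rewrite /leaf /internal pU.
have nl : 0 < nleaves e (par l).
  by apply/card_gt0P; exists l; rewrite inE esym elp ll.
case: (Htypes pint) => //; rewrite inG0 (negbTE pU) orbF => /andP[_ /eqP h].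
by rewrite h in nl.
Qed.

Lemma leaf_edge l y : leaf e l -> e l y -> y = par l.
Proof. by move=> ll; case: (par_spec ll) => _; apply. Qed.

Lemma G1_leaf v : v \in G1 -> exists l, [/\ leaf e l, e v l & forall u, e v u -> leaf e u -> u = l].
Proof.
rewrite inG1 => /andP[_ /cards1P[l hl]]; exists l.
have : l \in [set u | e v u & leaf e u] by rewrite hl set11.
rewrite inE => /andP[evl ll]; split => // u evu lu.
have : u \in [set u | e v u & leaf e u] by rewrite inE evu lu.
by rewrite hl inE => /eqP.
Qed.

Lemma G0G1 v : v \in G0 -> v \in G1 -> False.
Proof.
rewrite inG0 inG1 => h /andP[/andP[vU _] /eqP n1].
move: h; rewrite (negbTE vU) orbF n1.
by rewrite andbF.
Qed.

Lemma leafG0 l : leaf e l -> l \in G0 -> False.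
Proof.
case/andP => lU d1; rewrite inG0 (negbTE lU) orbF /internal lU d1.
by [].
Qed.

Lemma leafG1 l : leaf e l -> l \in G1 -> False.
Proof. by case/andP => lU d1; rewrite inG1 /internal lU d1. Qed.

Lemma cover v : [|| v \in G0, v \in G1 | leaf e v].
Proof.
case: (boolP (v \in U)) => vU; first by rewrite inG0 vU orbT.
case: (boolP (degGU e v == 1)) => d1; first by rewrite /leaf vU d1 !orbT.
have vi : internal e v by rewrite /internal vU d1.
by case: (Htypes vi) => ->; rewrite ?orbT.
Qed.


Definition Mset := [set v | (v \in G1) || leaf e v].
Definition phi v := if leaf e v then par v else v.

Lemma phi_inj (S : {set T}) : indep e S -> {in S :&: Mset &, injective phi}.
Proof.
move=> /indepP iS x y /setIP[xS _] /setIP[yS _]; rewrite /phi.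
case: (boolP (leaf e x)) => lx; case: (boolP (leaf e y)) => ly //.
- move=> pxy; have [l [ll ep hu]] := G1_leaf (par_G1 lx).
  have ex : e (par x) x by rewrite esym; case: (par_spec lx).
  have ey : e (par x) y by rewrite pxy esym; case: (par_spec ly).
  by rewrite (hu _ ex lx) (hu _ ey ly).
- move=> pxy; have := iS _ _ xS yS; rewrite -pxy; case: (par_spec lx) => -> //.
- move=> pxy; have := iS _ _ yS xS; rewrite pxy; case: (par_spec ly) => -> //.
Qed.

Lemma phi_G1 (S : {set T}) : phi @: (S :&: Mset) \subset G1.
Proof.
apply/subsetP => _ /imsetP[x /setIP[_ xM] ->]; move: xM; rewrite inE /phi => /orP[xg|lx].
  by case: ifP => // lx; case: (leafG1 lx xg).
by rewrite lx; apply: par_G1.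
Qed.

Lemma L1a (S : {set T}) : indep e S -> #|S :&: Mset| <= #|G1|.
Proof.
move=> iS; rewrite -(card_in_imset (phi_inj iS)).
exact: subset_leq_card (phi_G1 S).
Qed.

Lemma L1b (S : {set T}) : maxindep e setT S -> #|S :&: Mset| = #|G1|.
Proof.
move=> mS; have iS := maxindep_indep mS.
apply/eqP; rewrite eqn_leq L1a //= -(card_in_imset (phi_inj iS)).
apply: subset_leq_card; apply/subsetP => v vG.
have nlv : ~~ leaf e v by apply/negP => lv; case: (leafG1 lv vG).
case: (boolP (v \in S)) => vS.
  apply/imsetP; exists v; first by rewrite inE vS inE vG.
  by rewrite /phi (negbTE nlv).
have [l [ll evl hu]] := G1_leaf vG.
have pl : par l = v by rewrite -(leaf_edge (y := v) ll) // esym.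
case: (boolP (l \in S)) => lS.
  by apply/imsetP; exists l; [rewrite inE lS inE ll orbT | rewrite /phi ll pl].
have [y yS ely] := maxindep_elim esym eirr mS (in_setT l) lS.
by move: yS; rewrite (leaf_edge ll ely) pl (negbTE vS).
Qed.

Lemma SD0 (S : {set T}) : S :\: G0 = S :&: Mset.
Proof.
apply/setP => x; rewrite in_setD in_setI /Mset in_set.
case: (boolP (x \in G0)) => h0 /=.
  have -> : (x \in G1) || leaf e x = false.
    by apply/negP => /orP[h|h]; [exact: G0G1 h0 h | exact: leafG0 h h0].
  by rewrite andbF.
by have := cover x; rewrite (negbTE h0) /= => ->; rewrite andbT.
Qed.

Lemma card_split (S : {set T}) : #|S| = #|S :&: G0| + #|S :&: Mset|.
Proof. by rewrite -SD0 cardsID. Qed.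

Lemma L2 (S : {set T}) : maxindep e setT S -> maxindep e (G0 :\: nbhd e (S :&: G1)) (S :&: G0).
Proof.
move=> mS; have /indepP iS := maxindep_indep mS.
apply: maxindep_intro.
- apply/subsetP => x /setIP[xS xG]; rewrite inE xG andbT inE.
  apply/negP => /existsP[y /andP[/setIP[yS _] eyx]].
  by have := iS _ _ yS xS; rewrite eyx.
- apply: indep_sub (maxindep_indep mS); exact: subsetIl.
- move=> x; rewrite inE => /andP[xN xG]; rewrite inE xG andbT => xS.
  have [y yS exy] := maxindep_elim esym eirr mS (in_setT x) xS.
  have := cover y => /or3P[yG|yG|ly].
  + by exists y; rewrite // inE yS.
  + case/negP: xN; rewrite inE; apply/existsP; exists y.
    by rewrite inE yS yG esym.
  + have : x = par y by apply: leaf_edge; rewrite // esym.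
    by move=> xp; case: (G0G1 xG); rewrite xp par_G1.
Qed.


Section L3.
Variables (I J : {set T}).
Hypotheses (IG : I \subset G1) (iI : indep e I) (mJ : maxindep e (G0 :\: nbhd e I) J).
Definition Lf := [set l | leaf e l & par l \notin I].
Definition S3 := I :|: J :|: Lf.

Lemma JG0 : J \subset G0 :\: nbhd e I.
Proof. exact: maxindep_sub mJ. Qed.

Lemma S3G0 : S3 :&: G0 = J.
Proof.
apply/setP => x; rewrite /S3 !in_setI !in_setU.
case: (boolP (x \in J)) => xJ.
  by have := subsetP JG0 x xJ; rewrite in_setD => /andP[_ ->]; rewrite orbT.
case: (boolP (x \in G0)) => xG; rewrite ?andbF //= andbT.
apply/negP => /orP[/orP[xI|//]|]; first by case: (G0G1 xG (subsetP IG x xI)).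
by rewrite inE => /andP[lx _]; case: (leafG0 lx xG).
Qed.

Lemma lf_ok l y : l \in Lf -> y \in S3 -> ~~ e l y.
Proof.
rewrite inE => /andP[ll pl] yS; apply/negP => ely.
have yp := leaf_edge ll ely; move: yS; rewrite /S3 !in_setU yp => /orP[/orP[h|h]|h].
- by rewrite h in pl.
- by have := subsetP JG0 _ h; rewrite in_setD => /andP[_ h0]; case: (G0G1 h0 (par_G1 ll)).
- by move: h; rewrite inE => /andP[h _]; move/negP: (par_not_leaf ll).
Qed.

Lemma S3_indep : indep e S3.
Proof.
apply/indepP => x y xS yS.
have yS' := yS; have xS' := xS.
move: xS yS; rewrite /S3 !in_setU => /orP[/orP[xI|xJ]|xL] /orP[/orP[yI|yJ]|yL].
- by move/indepP: iI; apply.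
- have := subsetP JG0 _ yJ; rewrite in_setD => /andP[yN _].
  by apply/negP => exy; case/negP: yN; rewrite inE; apply/existsP; exists x; rewrite xI exy.
- by rewrite esym; exact: lf_ok yL xS'.
- have := subsetP JG0 _ xJ; rewrite in_setD => /andP[xN _].
  by apply/negP => exy; case/negP: xN; rewrite inE; apply/existsP; exists y; rewrite yI esym exy.
- by move/indepP: (maxindep_indep mJ); apply.
- by rewrite esym; exact: lf_ok yL xS'.
- have h := lf_ok xL yS'; exact h.
- have h := lf_ok xL yS'; exact h.
- have h := lf_ok xL yS'; exact h.
Qed.

Lemma S3_max : maxindep e setT S3.
Proof.
apply: maxindep_intro; [exact: subsetT | exact: S3_indep|].
move=> x _ xS; have xS' := xS; rewrite /S3 !in_setU in xS'.
case/norP: xS' => /norP[xI xJ] xL.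
have := cover x => /or3P[xG|xG|lx].
- case: (boolP (x \in nbhd e I)) => xN.
    move: xN; rewrite inE => /existsP[y /andP[yI eyx]].
    by exists y; [rewrite !in_setU yI | rewrite esym].
  have xV : x \in G0 :\: nbhd e I by rewrite in_setD xN xG.
  have [y yJ exy] := maxindep_elim esym eirr mJ xV xJ.
  by exists y; rewrite // !in_setU yJ orbT.
- have [l [ll exl _]] := G1_leaf xG.
  have pl : par l = x by rewrite -(leaf_edge (y := x) ll) // esym.
  by exists l; rewrite // !in_setU inE ll pl xI orbT.
- have pI : par x \in I by move: xL; rewrite inE lx /= negbK.
  by exists (par x); [rewrite !in_setU pI | case: (par_spec lx)].
Qed.

End L3.

Lemma alphaT : alpha e setT = #|G1| + alpha e G0.
Proof.
apply/eqP; rewrite eqn_leq; apply/andP; split.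
  have [S [_ iS <-]] := alpha_att e setT.
  rewrite (card_split S) addnC leq_add ?L1a //.
  by apply: alpha_ge; [exact: subsetIr | apply: indep_sub iS; exact: subsetIl].
have [K [KG iK hK]] := alpha_att e G0.
have mK : maxindep e (G0 :\: nbhd e set0) K.
  by rewrite nbhd0 setD0; apply: max_maxindep.
have I0 : (set0 : {set T}) \subset G1 by exact: sub0set.
have mS : maxindep e setT (S3 set0 K) by apply: S3_max => //; exact: indep0.
have := alpha_ge (V := setT) (subsetT _) (maxindep_indep mS).
by rewrite (card_split (S3 set0 K)) S3G0 // L1b // hK addnC.
Qed.

Lemma muT_le k : mu_alpha e setT <= k <->
  (forall I J : {set T}, I \subset G1 -> indep e I -> maxindep e (G0 :\: nbhd e I) J ->
     alpha e G0 <= #|J| + k).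
Proof.
rewrite /mu_alpha leq_subLR alphaT; split.
  move=> h I J IG iI mJ; have mS : maxindep e setT (S3 I J) by apply: S3_max.
  have := imin_le mS; rewrite (card_split (S3 I J)) S3G0 // L1b // => hi.
  lia.
move=> h; have [S [mS <-]] := imin_att e setT.
have := h _ _ (subsetIr S G1) (indep_sub (subsetIl S G1) (maxindep_indep mS)) (L2 mS).
rewrite (card_split S) L1b // => h2.
lia.
Qed.

End Str.

Section Red.
Variables (T : finType) (e : rel T).
Hypotheses (esym : symmetric e) (eirr : irreflexive e).
Variable V0 : {set T}.

Definition comp x := [set y in V0 | connect (induced e V0) x y].
Definition closedW (W : {set T}) :=
  W \subset V0 /\ (forall x y, x \in W -> y \in V0 -> e x y -> y \in W).

Lemma connect_fw' (r : rel T) (W : {set T}) x y :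
  (forall a b, a \in W -> r a b -> b \in W) -> x \in W -> connect r x y -> y \in W.
Proof.
move=> h xW /connectP[p pp ->]; elim: p x xW pp => //= a p IH x xW /andP[rxa pp].
exact: IH (h _ _ xW rxa) pp.
Qed.

Lemma comp_in x : x \in V0 -> x \in comp x.
Proof. by move=> xV; rewrite inE xV connect0. Qed.

Lemma comp_closed x : closedW (comp x).
Proof.
split; first by apply/subsetP => y; rewrite inE => /andP[].
move=> y z; rewrite !inE => /andP[yV cxy] zV eyz; rewrite zV /=.
apply: connect_trans cxy (connect1 _); by rewrite /induced eyz yV zV.
Qed.

Lemma comp_sub x (W : {set T}) : closedW W -> x \in W -> comp x \subset W.
Proof.
move=> [WV cW] xW; apply/subsetP => y; rewrite inE => /andP[_ cxy].
apply: connect_fw' cxy => // a b aW /and3P[eab _ bV]; exact: cW eab.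
Qed.

Lemma comp_card x : x \in V0 -> #|comp x| <= max_comp e V0.
Proof. by move=> xV; apply: (leq_bigmax_cond x). Qed.

Lemma closedD (W C : {set T}) : closedW W -> closedW C -> C \subset W -> closedW (W :\: C).
Proof.
move=> [WV cW] [CV cC] CW; split.
  by apply: subset_trans WV; apply: subsetDl.
move=> x y; rewrite !inE => /andP[xC xW] yV exy; rewrite (cW _ _ xW yV exy) andbT.
apply/negP => yC; case/negP: xC; apply: cC yC _ _; first exact: (subsetP WV).
by rewrite esym.
Qed.

Lemma closedU (C D : {set T}) : closedW C -> closedW D -> closedW (C :|: D).
Proof.
move=> [CV cC] [DV cD]; split; first by rewrite subUset CV DV.
move=> x y; rewrite !inE => /orP[xC|xD] yV exy.
  by rewrite (cC _ _ xC yV exy).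
by rewrite (cD _ _ xD yV exy) orbT.
Qed.

Lemma closedV0 : closedW V0.
Proof. by split. Qed.

Lemma splitc (A W C : {set T}) : C \subset W ->
  #|A :&: W| = #|A :&: C| + #|A :&: (W :\: C)|.
Proof.
move=> CW; rewrite -(cardsID C (A :&: W)).
have -> : A :&: W :&: C = A :&: C.
  apply/setP => x; rewrite !inE; case: (boolP (x \in C)) => xC; rewrite ?andbF //.
  by rewrite (subsetP CW x xC) !andbT.
have -> // : A :&: W :\: C = A :&: (W :\: C).
by apply/setP => x; rewrite !inE; case: (x \in A); case: (x \in C); case: (x \in W).
Qed.

Variables (J K : {set T}).

Lemma comp_exists n : forall W : {set T}, #|W| <= n -> closedW W -> #|J :&: W| < #|K :&: W| ->
  exists x, [/\ x \in V0, comp x \subset W & #|J :&: comp x| < #|K :&: comp x|].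
Proof.
elim: n => [|n IH] W cardW cW lt.
  move: cardW; rewrite leqn0 cards_eq0 => /eqP W0.
  by move: lt; rewrite W0 !setI0 cards0.
case: (set_0Vmem W) => [W0|[x xW]].
  by move: lt; rewrite W0 !setI0 cards0.
have xV : x \in V0 by case: cW => WV _; exact: (subsetP WV).
have CW := comp_sub cW xW.
case: (ltnP #|J :&: comp x| #|K :&: comp x|) => hc; first by exists x.
have cW' := closedD cW (comp_closed x) CW.
have card' : #|W :\: comp x| <= n.
  have := cardsID (comp x) W; have : 0 < #|W :&: comp x|.
    by apply/card_gt0P; exists x; rewrite inE xW comp_in.
  lia.
have lt' : #|J :&: (W :\: comp x)| < #|K :&: (W :\: comp x)|.
  by move: lt; rewrite (splitc J CW) (splitc K CW); lia.
have [y [yV Cy hy]] := IH _ card' cW' lt'.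
exists y; split => //; apply: subset_trans Cy _; exact: subsetDl.
Qed.

Lemma find_W j : (j == 1) || (j == 2) -> J \subset V0 -> K \subset V0 ->
  #|J| + j <= #|K| ->
  exists W : {set T}, [/\ closedW W, #|W| <= j * max_comp e V0 & #|J :&: W| + j <= #|K :&: W|].
Proof.
move=> hj JV KV lt.
have eJ : J :&: V0 = J by apply/setIidPl.
have eK : K :&: V0 = K by apply/setIidPl.
have lt0 : #|J :&: V0| < #|K :&: V0| by rewrite eJ eK; move: hj lt => /orP[/eqP->|/eqP->]; lia.
have [x [xV C1 h1]] := comp_exists (leqnn _) closedV0 lt0.
case/orP: hj => /eqP hj; subst j.
  by exists (comp x); split; [exact: comp_closed | rewrite mul1n comp_card | lia].
case: (leqP (#|J :&: comp x| + 2) #|K :&: comp x|) => h2.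
  exists (comp x); split => //; first exact: comp_closed.
  by have := comp_card xV; lia.
have cW' := closedD closedV0 (comp_closed x) C1.
have lt' : #|J :&: (V0 :\: comp x)| < #|K :&: (V0 :\: comp x)|.
  have lt2 : #|J :&: V0| + 2 <= #|K :&: V0| by rewrite eJ eK.
  by move: lt2; rewrite (splitc J C1) (splitc K C1); lia.
have [y [yV C2 hy]] := comp_exists (leqnn _) cW' lt'.
have C2' : comp y \subset V0 :\: comp x := C2.
have sub1 : comp x \subset comp x :|: comp y by exact: subsetUl.
have eD : (comp x :|: comp y) :\: comp x = comp y.
  apply/setP => z; rewrite in_setD in_setU; case: (boolP (z \in comp y)) => zy.
    by rewrite orbT andbT; have := subsetP C2 z zy; rewrite in_setD => /andP[].
  by rewrite orbF andNb.
exists (comp x :|: comp y); split.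
- exact: closedU (comp_closed x) (comp_closed y).
- have := cardsU (comp x) (comp y); have := comp_card xV; have := comp_card yV; lia.
- by rewrite (splitc J sub1) (splitc K sub1) eD; lia.
Qed.


Lemma cross_indep (W A B : {set T}) : closedW W -> A \subset W -> B \subset V0 :\: W ->
  indep e A -> indep e B -> indep e (A :|: B).
Proof.
move=> [WV cW] AW BV /indepP iA /indepP iB.
have noedge : forall a b, a \in A -> b \in B -> ~~ e a b.
  move=> a b aA bB; apply/negP => eab.
  have := subsetP BV b bB; rewrite in_setD => /andP[bW bV].
  by rewrite (cW _ _ (subsetP AW a aA) bV eab) in bW.
apply/indepP => x y /setUP[xA|xB] /setUP[yA|yB].
- exact: iA.
- exact: noedge.
- by rewrite esym; exact: noedge.
- exact: iB.
Qed.

End Red.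

Lemma reduce (T : finType) (e : rel T) (esym : symmetric e) (eirr : irreflexive e)
  (V0 I J : {set T}) j :
  (j == 1) || (j == 2) -> maxindep e (V0 :\: nbhd e I) J -> #|J| + j <= alpha e V0 ->
  exists I' : {set T}, [/\ I' \subset I, #|I'| <= j * max_comp e V0 &
                         imin e (V0 :\: nbhd e I') + j <= alpha e V0].
Proof.
move=> hj mJ lt.
have [K [KV iK hK]] := alpha_att e V0.
have JV : J \subset V0.
  by apply: subset_trans (maxindep_sub mJ) _; exact: subsetDl.
have lt' : #|J| + j <= #|K| by rewrite hK.
have [W [cW cardW hW]] := find_W esym hj JV KV lt'.
pose g w := odflt w [pick y in I | e y w].
have hg : forall w, w \in nbhd e I -> g w \in I /\ e (g w) w.
  move=> w; rewrite inE /g => /existsP[y /andP[yI eyw]].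
  case: pickP => [z /andP[zI ezw] | none] //=.
  by have := none y; rewrite yI eyw.
pose I' := g @: (W :&: nbhd e I).
have I'I : I' \subset I.
  by apply/subsetP => _ /imsetP[w /setIP[_ wN] ->]; case: (hg w wN).
have key : forall w, w \in W -> (w \in nbhd e I') = (w \in nbhd e I).
  move=> w wW; apply/idP/idP.
    rewrite !inE => /existsP[y /andP[yI eyw]]; apply/existsP; exists y.
    by rewrite (subsetP I'I y yI).
  move=> wN; rewrite inE; apply/existsP; exists (g w).
  case: (hg w wN) => _ ->; rewrite andbT; apply/imsetP; exists w => //.
  by rewrite inE wW.
exists I'; split => //.
  apply: leq_trans cardW; apply: leq_trans (leq_imset_card _ _) _.
  by apply: subset_leq_card; exact: subsetIl.
have [X mX] := maxindep_exists e ((V0 :\: W) :\: nbhd e I').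
have XW : X \subset V0 :\: W.
  by apply: subset_trans (maxindep_sub mX) _; exact: subsetDl.
have JWW : J :&: W \subset W by exact: subsetIr.
have mJ' : maxindep e (V0 :\: nbhd e I') ((J :&: W) :|: X).
  apply: maxindep_intro.
  - rewrite subUset; apply/andP; split.
      apply/subsetP => x /setIP[xJ xW]; have := subsetP (maxindep_sub mJ) x xJ.
      by rewrite !in_setD key.
    apply: subset_trans (maxindep_sub mX) _; apply/subsetP => x.
    by rewrite !in_setD => /andP[-> /andP[_ ->]].
  - apply: (cross_indep esym cW JWW XW).
      by apply: indep_sub (maxindep_indep mJ); exact: subsetIl.
    exact: maxindep_indep mX.
  - move=> x; rewrite in_setD => /andP[xN xV]; rewrite in_setU negb_or => /andP[xJW xX].
    case: (boolP (x \in W)) => xW.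
      have xJ : x \notin J by move: xJW; rewrite in_setI xW andbT.
      have xV' : x \in V0 :\: nbhd e I by rewrite in_setD -key // xN xV.
      have [y yJ exy] := maxindep_elim esym eirr mJ xV' xJ.
      exists y => //; rewrite in_setU in_setI yJ /=.
      case: cW => _ cW; rewrite (cW x y xW (subsetP JV y yJ) exy) //.
    have xV' : x \in (V0 :\: W) :\: nbhd e I' by rewrite !in_setD xN xW xV.
    have [y yX exy] := maxindep_elim esym eirr mX xV' xX.
    by exists y => //; rewrite in_setU yX orbT.
have c1 : #|(J :&: W) :|: X| <= #|J :&: W| + #|X| by rewrite cardsU leq_subr.
have KWW : K :&: W \subset W by exact: subsetIr.
have iU : indep e ((K :&: W) :|: X).
  apply: (cross_indep esym cW KWW XW); last exact: maxindep_indep mX.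
  by apply: indep_sub iK; exact: subsetIl.
have c2 : #|(K :&: W) :|: X| <= alpha e V0.
  apply: alpha_ge iU; rewrite subUset; apply/andP; split.
    by apply: subset_trans KV; exact: subsetIl.
  by apply: subset_trans XW _; exact: subsetDl.
have dis : (K :&: W) :&: X = set0.
  apply/setP => x; rewrite in_set0 !in_setI; apply/negP => /andP[/andP[_ xW] xX].
  by have := subsetP XW x xX; rewrite in_setD xW.
move: c2; rewrite cardsU dis cards0 subn0 => c2.
have := imin_le mJ'; lia.
Qed.

Unset Implicit Arguments.

Theorem corollary10 (T : finType) (e : rel T)
  (esym : symmetric e) (eirr : irreflexive e)
  (Htypes : forall v : T, internal e v ->
              v \in type_set e 0 \/ v \in type_set e 1) :
  let G0 := type_set e 0 in
  let G1 := type_set e 1 in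
  let n0 := max_comp e G0 in
  (well_covered e [set: T] <->
     well_covered e G0 /\
     (forall I : {set T}, I \subset G1 -> indep e I -> #|I| <= n0 ->
        imin e (G0 :\: nbhd e I) = alpha e G0))
  /\
  (mu_alpha e [set: T] <= 1 <->
     mu_alpha e G0 <= 1 /\
     (forall I : {set T}, I \subset G1 -> indep e I -> #|I| <= 2 * n0 ->
        alpha e G0 - imin e (G0 :\: nbhd e I) <= 1)).
Proof.
move=> G0 G1 n0; rewrite {}/n0 {}/G1 {}/G0.
have hmain : forall k, k <= 1 ->
  (mu_alpha e setT <= k <-> mu_alpha e (type_set e 0) <= k /\
    (forall I : {set T}, I \subset type_set e 1 -> indep e I ->
       #|I| <= k.+1 * max_comp e (type_set e 0) ->
       alpha e (type_set e 0) - imin e (type_set e 0 :\: nbhd e I) <= k)).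
  move=> k hk; rewrite (muT_le esym eirr Htypes k); split.
  - move=> h; split.
    + have [J [mJ hJ]] := imin_att e (type_set e 0).
      rewrite /mu_alpha -hJ leq_subLR; apply: h (sub0set _) (indep0 e) _.
      by rewrite nbhd0 setD0.
    + move=> I IG iI _; have [J [mJ <-]] := imin_att e (type_set e 0 :\: nbhd e I).
      rewrite leq_subLR; exact: h IG iI mJ.
  - move=> [_ h] I J IG iI mJ; rewrite leqNgt; apply/negP => lt.
    have lt' : #|J| + k.+1 <= alpha e (type_set e 0) by lia.
    have hj : (k.+1 == 1) || (k.+1 == 2) by case: k hk {lt lt' h} => [|[|]].
    have [I' [I'I cI' hI']] := reduce esym eirr hj mJ lt'.
    have := h I' (subset_trans I'I IG) (indep_sub I'I iI) cI'; lia.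
split.
  have [A B] := hmain 0 isT; rewrite /well_covered; split.
    move=> h0; have [h1 h2] := A (eq_leq h0); split; first by apply/eqP; rewrite -leqn0.
    move=> I IG iI cI; have cI' : #|I| <= 1 * max_comp e (type_set e 0) by rewrite mul1n.
    have := h2 I IG iI cI'.
    have := imin_le_alpha e (type_set e 0 :\: nbhd e I).
    have := alpha_mono e (subsetDl (type_set e 0) (nbhd e I)); lia.
  move=> [h1 h2]; apply/eqP; rewrite -leqn0; apply: B; split; first by rewrite h1.
  by move=> I IG iI cI; rewrite h2 ?subnn // -(mul1n (max_comp _ _)).
exact: hmain 1 isT.
Qed.
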